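(* Let $M$ be a nearly finitary matroid that is not $k$-nearly finitary for any $k\in\mathbb{N}$, and let $N$ be a nearly finitary matroid whose ground set $E(N)$ is disjoint from $E(M)$. Then $M\vee N$ is a nearly finitary matroid that is not $k$-nearly finitary for any $k\in\mathbb{N}$.
   Context: Matroids (possibly infinite): $\emptyset$ independent; subsets of independent sets independent; if $B$ is maximal independent and $A$ non-maximal independent, then $A\cup\{b\}$ is independent for some $b\in B\setminus A$; for independent $A\subseteq X\subseteq E$ there is a maximal independent $S$ with $A\subseteq S\subseteq X$. Bases are maximal independent sets. The union $M\vee N$ has ground set $E(M)\cup E(N)$ and independent sets $\{S\cup T: S\text{ independent in }M,\ T\text{ independent in }N\}$. The finitarization $M^{\mathrm{fin}}$ has as independent sets those sets all of whose finite subsets are independent in $M$. $M$ is nearly finitary if $F\setminus B$ is finite whenever a base $F$ of $M^{\mathrm{fin}}$ contains a base $B$ of $M$; $k$-nearly finitary if $|F\setminus B|\le k$ for all such pairs. *)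

(* Defs.v *)
From Stdlib Require Import List.

Set Implicit Arguments.

Definition set (E : Type) := E -> Prop.

Section Matroids.
Variable E : Type.

Definition subset (A B : set E) : Prop := forall x, A x -> B x.
Definition setU (A B : set E) : set E := fun x => A x \/ B x.
Definition setD (A B : set E) : set E := fun x => A x /\ ~ B x.
Definition add1 (A : set E) (b : E) : set E := fun x => A x \/ x = b.
Definition disjoint (A B : set E) : Prop := forall x, A x -> B x -> False.

Definition finite_set (A : set E) : Prop :=
  exists l : list E, forall x, A x -> In x l.

Definition card_le (A : set E) (k : nat) : Prop :=
  exists l : list E, length l <= k /\ forall x, A x -> In x l.

Record matroid := Matroid { ground : set E; indep : set E -> Prop }.

Definition maximal_in (P : set E -> Prop) (S : set E) : Prop :=
  P S /\ forall T, P T -> subset S T -> subset T S.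

Definition is_base (M : matroid) (B : set E) : Prop := maximal_in (indep M) B.

(* Matroid axioms (I1)-(I3),(IM) from the paper, plus independent sets
   lie inside the ground set. *)
Definition is_matroid (M : matroid) : Prop :=
  (forall I, indep M I -> subset I (ground M)) /\
  indep M (fun _ => False) /\
  (forall A B, indep M A -> subset B A -> indep M B) /\
  (forall A B, is_base M B -> indep M A -> ~ is_base M A ->
     exists b, B b /\ ~ A b /\ indep M (add1 A b)) /\
  (forall A X, indep M A -> subset A X -> subset X (ground M) ->
     exists S, maximal_in (fun I => indep M I /\ subset I X) S /\
               subset A S /\ subset S X).

Definition matroid_union (M N : matroid) : matroid :=
  Matroid (setU (ground M) (ground N))
          (fun I => exists S T, indep M S /\ indep N T /\
                      forall x, I x <-> (S x \/ T x)).

Definition finitarization (M : matroid) : matroid :=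
  Matroid (ground M)
          (fun I => subset I (ground M) /\
                    forall J, subset J I -> finite_set J -> indep M J).

Definition nearly_finitary (M : matroid) : Prop :=
  forall F B, is_base (finitarization M) F -> is_base M B -> subset B F ->
    finite_set (setD F B).

Definition k_nearly_finitary (k : nat) (M : matroid) : Prop :=
  forall F B, is_base (finitarization M) F -> is_base M B -> subset B F ->
    card_le (setD F B) k.

End Matroids.

(* Main.v *)
Require Import Defs.
From Stdlib Require Import List Classical FunctionalExtensionality PropExtensionality.
From mathcomp Require classical_sets.
Set Implicit Arguments.

Lemma zorn_sets (T : Type) (P : set T -> Prop) :
  (forall F : set T -> Prop, (forall X, F X -> P X) ->
     (forall X Y, F X -> F Y -> subset X Y \/ subset Y X) ->
     P (fun a => exists2 X, F X & X a)) ->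
  exists A, P A /\ forall B, subset A B -> ~ subset B A -> ~ P B.
Proof.
intros H.
destruct (@classical_sets.Zorn_bigcup T P) as [A [PA HA]].
- intros F FP Ftot. apply (H F FP Ftot).
- exists A; split; [exact PA|]. intros B AB BA. apply (HA B). split; assumption.
Qed.

Lemma sext (E : Type) (A B : set E) : (forall x, A x <-> B x) -> A = B.
Proof.
intros H; apply functional_extensionality; intro x; apply propositional_extensionality; apply H.
Qed.

Definition inter (E : Type) (A B : set E) : set E := fun x => A x /\ B x.

Lemma inter_l (E : Type) (gM gN X Y : set E) :
  disjoint gM gN -> subset X gM -> subset Y gN -> inter (setU X Y) gM = X.
Proof.
intros D HX HY; apply sext; intro x; unfold inter, setU; split.
- intros [[H|H] G]; [exact H| destruct (D x G (HY x H))].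
- intro H; split; [left; exact H| exact (HX x H)].
Qed.

Lemma inter_r (E : Type) (gM gN X Y : set E) :
  disjoint gM gN -> subset X gM -> subset Y gN -> inter (setU X Y) gN = Y.
Proof.
intros D HX HY; apply sext; intro x; unfold inter, setU; split.
- intros [[H|H] G]; [destruct (D x (HX x H) G)| exact H].
- intro H; split; [right; exact H| exact (HY x H)].
Qed.

Lemma max_split (E : Type) (gM gN : set E) (PU PM PN : set E -> Prop) :
  disjoint gM gN ->
  (forall X, PM X -> subset X gM) -> (forall X, PN X -> subset X gN) ->
  (forall I, PU I <-> subset I (setU gM gN) /\ PM (inter I gM) /\ PN (inter I gN)) ->
  forall B, maximal_in PU B <->
    subset B (setU gM gN) /\ maximal_in PM (inter B gM) /\ maximal_in PN (inter B gN).
Proof.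
intros D HM HN HU B; split.
- intros [PB MB]. destruct (proj1 (HU B) PB) as [Bg [PBM PBN]].
  split; [exact Bg|split].
  + split; [exact PBM|]. intros T PT ST.
    assert (Tg : subset T gM) by (apply HM; exact PT).
    assert (Hg : subset (inter B gN) gN) by (intros x [_ h]; exact h).
    assert (PUU : PU (setU T (inter B gN))).
    { apply HU. rewrite (inter_l D Tg Hg), (inter_r D Tg Hg).
      split; [|split; assumption].
      intros x [h|[_ h]]; [left; apply Tg; exact h| right; exact h]. }
    assert (BU : subset B (setU T (inter B gN))).
    { intros x Bx. destruct (Bg x Bx) as [h|h]; [left; apply ST; split; assumption|right; split; assumption]. }
    pose proof (MB _ PUU BU) as UB.
    intros x Tx. split; [apply UB; left; exact Tx| apply Tg; exact Tx].
  + split; [exact PBN|]. intros T PT ST.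
    assert (Tg : subset T gN) by (apply HN; exact PT).
    assert (Hg : subset (inter B gM) gM) by (intros x [_ h]; exact h).
    assert (PUU : PU (setU (inter B gM) T)).
    { apply HU. rewrite (inter_l D Hg Tg), (inter_r D Hg Tg).
      split; [|split; assumption].
      intros x [[_ h]|h]; [left; exact h| right; apply Tg; exact h]. }
    assert (BU : subset B (setU (inter B gM) T)).
    { intros x Bx. destruct (Bg x Bx) as [h|h]; [left; split; assumption|right; apply ST; split; assumption]. }
    pose proof (MB _ PUU BU) as UB.
    intros x Tx. split; [apply UB; right; exact Tx| apply Tg; exact Tx].
- intros [Bg [[PBM MBM] [PBN MBN]]]. split.
  + apply HU; split; [exact Bg| split; assumption].
  + intros T PT BT. destruct (proj1 (HU T) PT) as [Tg [PTM PTN]].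
    assert (h1 := MBM _ PTM (fun x (h : inter B gM x) => conj (BT x (proj1 h)) (proj2 h))).
    assert (h2 := MBN _ PTN (fun x (h : inter B gN x) => conj (BT x (proj1 h)) (proj2 h))).
    intros x Tx. destruct (Tg x Tx) as [g|g].
    * apply (h1 x (conj Tx g)).
    * apply (h2 x (conj Tx g)).
Qed.

Lemma union_indep (E : Type) (M N : matroid E) :
  is_matroid M -> is_matroid N -> disjoint (ground M) (ground N) ->
  forall I, indep (matroid_union M N) I <->
   subset I (setU (ground M) (ground N)) /\ indep M (inter I (ground M)) /\
   indep N (inter I (ground N)).
Proof.
intros [M1 [_ [M2 _]]] [N1 [_ [N2 _]]] D I; split.
- simpl. intros [S [T [HS [HT HI]]]]. split; [|split].
  + intros x Ix. destruct (proj1 (HI x) Ix) as [h|h]; [left; apply (M1 S); auto|right; apply (N1 T); auto].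
  + apply (M2 S); [exact HS|]. intros x [Ix g]. destruct (proj1 (HI x) Ix) as [h|h]; [exact h|].
    destruct (D x g (N1 T HT x h)).
  + apply (N2 T); [exact HT|]. intros x [Ix g]. destruct (proj1 (HI x) Ix) as [h|h]; [|exact h].
    destruct (D x (M1 S HS x h) g).
- intros [Ig [HS HT]]. simpl. exists (inter I (ground M)), (inter I (ground N)).
  split; [exact HS|split; [exact HT|]]. intro x; split.
  + intro Ix. destruct (Ig x Ix) as [g|g]; [left|right]; split; assumption.
  + intros [[h _]|[h _]]; exact h.
Qed.

Lemma fin_indep_union (E : Type) (M N : matroid E) :
  is_matroid M -> is_matroid N -> disjoint (ground M) (ground N) ->
  forall I, indep (finitarization (matroid_union M N)) I <->
   subset I (setU (ground M) (ground N)) /\ indep (finitarization M) (inter I (ground M)) /\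
   indep (finitarization N) (inter I (ground N)).
Proof.
intros HM HN D I.
pose proof HM as [M1 [_ [M2 _]]]. pose proof HN as [N1 [_ [N2 _]]].
simpl; split.
- intros [Ig Hf]. split; [exact Ig|split; split].
  + intros x [_ h]; exact h.
  + intros J JI Jf.
    assert (h : indep (matroid_union M N) J).
    { apply Hf; [intros x Jx; exact (proj1 (JI x Jx))| exact Jf]. }
    apply (union_indep HM HN D) in h. destruct h as [_ [h _]].
    apply (M2 _ _ h). intros x Jx; split; [exact Jx| exact (proj2 (JI x Jx))].
  + intros x [_ h]; exact h.
  + intros J JI Jf.
    assert (h : indep (matroid_union M N) J).
    { apply Hf; [intros x Jx; exact (proj1 (JI x Jx))| exact Jf]. }
    apply (union_indep HM HN D) in h. destruct h as [_ [_ h]].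
    apply (N2 _ _ h). intros x Jx; split; [exact Jx| exact (proj2 (JI x Jx))].
- intros [Ig [[_ FM] [_ FN]]]. split; [exact Ig|]. intros J JI [l Hl].
  apply (union_indep HM HN D). split; [|split].
  + intros x Jx; apply Ig, JI, Jx.
  + apply FM. intros x [Jx g]; split; [apply JI; exact Jx| exact g].
    exists l; intros x [Jx _]; apply Hl, Jx.
  + apply FN. intros x [Jx g]; split; [apply JI; exact Jx| exact g].
    exists l; intros x [Jx _]; apply Hl, Jx.
Qed.

Lemma fin_sub (E : Type) (N : matroid E) A B :
  indep (finitarization N) A -> subset B A -> indep (finitarization N) B.
Proof.
simpl. intros [Ag HA] BA. split.
- intros x Bx; apply Ag, BA, Bx.
- intros J JB Jf. apply HA; [intros x Jx; apply BA, JB, Jx| exact Jf].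
Qed.

Lemma base_exists (E : Type) (N : matroid E) :
  is_matroid N -> exists B, is_base N B.
Proof.
intros [N1 [N0 [N2 [_ NM]]]].
destruct (NM (fun _ => False) (ground N) N0 (fun x h => False_ind _ h) (fun x h => h))
  as [S [[[HS _] MS] _]].
exists S. split; [exact HS|]. intros T HT ST. apply MS; [split; [exact HT| apply N1; exact HT]| exact ST].
Qed.

Lemma chain_cover (E : Type) (F : set E -> Prop) (B : set E) :
  (forall X Y, F X -> F Y -> subset X Y \/ subset Y X) ->
  forall l J, (forall x, J x -> In x l) ->
   subset J (setU (fun a => exists2 X, F X & X a) B) ->
   subset J B \/ exists2 X, F X & subset J (setU X B).
Proof.
intros Ftot l. induction l as [|a l IH]; intros J Jl JU.
- left. intros x Jx. destruct (Jl x Jx).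
- set (J' := fun y => J y /\ y <> a).
  assert (R' : subset J' B \/ exists2 X, F X & subset J' (setU X B)).
  { apply IH.
    - intros y [Jy ya]. destruct (Jl y Jy) as [h|h]; [subst; destruct ya; reflexivity| exact h].
    - intros y [Jy _]; apply JU, Jy. }
  assert (split : forall P : set E, subset J' P -> P a -> subset J P).
  { intros P H1 H2 y Jy. destruct (classic (y = a)) as [e|ne]; [subst; exact H2| apply H1; split; assumption]. }
  destruct (classic (J a)) as [Ja|nJa].
  + destruct (JU a Ja) as [[Y FY Ya]|Ba].
    * destruct R' as [R|[X FX R]].
      -- right; exists Y; [exact FY|]. apply split; [intros y h; right; apply R, h| left; exact Ya].
      -- destruct (Ftot X Y FX FY) as [XY|YX].
         ++ right; exists Y; [exact FY|]. apply split; [|left; exact Ya].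
            intros y h; destruct (R y h) as [h'|h']; [left; apply XY, h'| right; exact h'].
         ++ right; exists X; [exact FX|]. apply split; [exact R| left; apply YX, Ya].
    * destruct R' as [R|[X FX R]].
      -- left; apply split; assumption.
      -- right; exists X; [exact FX|]. apply split; [exact R| right; exact Ba].
  + assert (JJ : subset J J').
    { intros y Jy; split; [exact Jy| intro e; subst; exact (nJa Jy)]. }
    destruct R' as [R|[X FX R]].
    * left; intros y Jy; apply R, JJ, Jy.
    * right; exists X; [exact FX|]. intros y Jy; apply R, JJ, Jy.
Qed.

Lemma fin_ext (E : Type) (N : matroid E) B :
  is_matroid N -> indep N B ->
  exists F, is_base (finitarization N) F /\ subset B F.
Proof.
intros HN HB. pose proof HN as [N1 [_ [N2 _]]].
set (P := fun X => indep (finitarization N) (setU X B)).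
destruct (@zorn_sets E P) as [A [PA MA]].
- intros F FP Ftot. unfold P; simpl. split.
  + intros x [[X FX Xx]|Bx].
    * destruct (FP X FX) as [h _]. apply h. left; exact Xx.
    * apply (N1 B HB x Bx).
  + intros J JU [l Jl].
    destruct (@chain_cover E F B Ftot l J Jl JU) as [R|[X FX R]].
    * apply (N2 B J HB R).
    * destruct (FP X FX) as [_ h]. apply h; [exact R| exists l; exact Jl].
- exists (setU A B). split; [|intros x h; right; exact h].
  split; [exact PA|]. intros T PT ST.
  destruct (classic (subset T A)) as [TA|nTA].
  + intros x Tx; left; apply TA, Tx.
  + exfalso. apply (MA T); [intros x h; apply ST; left; exact h| exact nTA|].
    unfold P. apply (fin_sub PT). intros x [h|h]; [exact h| apply ST; right; exact h].
Qed.

Unset Implicit Arguments.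

Theorem theorem3p4p6 (E : Type) (M N : matroid E) :
  is_matroid M -> is_matroid N ->
  nearly_finitary M -> (forall k : nat, ~ k_nearly_finitary k M) ->
  nearly_finitary N ->
  disjoint (ground M) (ground N) ->
  is_matroid (matroid_union M N) /\
  nearly_finitary (matroid_union M N) /\
  (forall k : nat, ~ k_nearly_finitary k (matroid_union M N)).
Proof.
intros HM HN nfM nkM nfN D.
pose proof HM as [M1 [M0 [M2 [M3 MM]]]]. pose proof HN as [N1 [N0 [N2 [N3 NM]]]].
assert (UI := union_indep HM HN D).
assert (FI := fin_indep_union HM HN D).
assert (BS := @max_split E (ground M) (ground N) (indep (matroid_union M N)) (indep M) (indep N) D M1 N1 UI).
assert (FS := @max_split E (ground M) (ground N) (indep (finitarization (matroid_union M N))) (indep (finitarization M)) (indep (finitarization N)) D (fun X h => proj1 h) (fun X h => proj1 h) FI).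
split; [|split].
-
  split; [|split; [|split; [|split]]].
  + intros I HI. apply UI in HI. exact (proj1 HI).
  + apply UI. split; [intros x h; destruct h|split].
    * apply (M2 _ _ M0). intros x [h _]; exact h.
    * apply (N2 _ _ N0). intros x [h _]; exact h.
  + intros A B HA BA. apply UI in HA. destruct HA as [Ag [HAM HAN]].
    apply UI. split; [intros x h; apply Ag, BA, h|split].
    * apply (M2 _ _ HAM). intros x [h g]; split; [apply BA, h|exact g].
    * apply (N2 _ _ HAN). intros x [h g]; split; [apply BA, h|exact g].
  + intros A B HB HA nA.
    apply BS in HB. destruct HB as [Bg [BM BN]].
    pose proof HA as HA'. apply UI in HA'. destruct HA' as [Ag [HAM HAN]].
    assert (nn : ~ is_base M (inter A (ground M)) \/ ~ is_base N (inter A (ground N))).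
    { apply not_and_or. intros [h1 h2]. apply nA. apply BS. split; [exact Ag|split; assumption]. }
    destruct nn as [n|n].
    * destruct (M3 _ _ BM HAM n) as [b [[Bb gb] [nb Hb]]].
      exists b. split; [exact Bb|split; [intro Ab; apply nb; split; assumption|]].
      apply UI. split; [|split].
      -- intros x [h|h]; [apply Ag, h| subst; left; exact gb].
      -- apply (M2 _ _ Hb). intros x [[h|h] g]; [left; split; assumption| right; exact h].
      -- apply (N2 _ _ HAN). intros x [[h|h] g]; [split; assumption| subst; destruct (D b gb g)].
    * destruct (N3 _ _ BN HAN n) as [b [[Bb gb] [nb Hb]]].
      exists b. split; [exact Bb|split; [intro Ab; apply nb; split; assumption|]].
      apply UI. split; [|split].
      -- intros x [h|h]; [apply Ag, h| subst; right; exact gb].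
      -- apply (M2 _ _ HAM). intros x [[h|h] g]; [split; assumption| subst; destruct (D b g gb)].
      -- apply (N2 _ _ Hb). intros x [[h|h] g]; [left; split; assumption| right; exact h].
  + intros A X HA AX Xg.
    pose proof HA as HA'. apply UI in HA'. destruct HA' as [Ag [HAM HAN]].
    destruct (MM (inter A (ground M)) (inter X (ground M)) HAM
       (fun x h => conj (AX x (proj1 h)) (proj2 h)) (fun x h => proj2 h))
      as [SM [[[HSM SMX] maxM] [ASM SMX']]].
    destruct (NM (inter A (ground N)) (inter X (ground N)) HAN
       (fun x h => conj (AX x (proj1 h)) (proj2 h)) (fun x h => proj2 h))
      as [SN [[[HSN SNX] maxN] [ASN SNX']]].
    assert (SMg : subset SM (ground M)) by (intros x h; exact (proj2 (SMX x h))).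
    assert (SNg : subset SN (ground N)) by (intros x h; exact (proj2 (SNX x h))).
    exists (setU SM SN).
    assert (SX : subset (setU SM SN) X).
    { intros x [h|h]; [exact (proj1 (SMX x h))| exact (proj1 (SNX x h))]. }
    split; [split; [split|]|split].
    * apply UI. rewrite (inter_l D SMg SNg), (inter_r D SMg SNg).
      split; [|split; assumption].
      intros x [h|h]; [left; apply SMg, h| right; apply SNg, h].
    * exact SX.
    * intros T [HT TX] ST. apply UI in HT. destruct HT as [Tg [HTM HTN]].
      assert (h1 := maxM (inter T (ground M)) (conj HTM (fun x h => conj (TX x (proj1 h)) (proj2 h)))
                    (fun x h => conj (ST x (or_introl h)) (SMg x h))).
      assert (h2 := maxN (inter T (ground N)) (conj HTN (fun x h => conj (TX x (proj1 h)) (proj2 h)))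
                    (fun x h => conj (ST x (or_intror h)) (SNg x h))).
      intros x Tx. destruct (Tg x Tx) as [g|g]; [left; apply h1; split; assumption| right; apply h2; split; assumption].
    * intros x Ax. destruct (Ag x Ax) as [g|g]; [left; apply ASM; split; assumption| right; apply ASN; split; assumption].
    * exact SX.
-
  intros F B HF HB BF.
  apply FS in HF. destruct HF as [Fg [FM FN]].
  apply BS in HB. destruct HB as [Bg [BM BN]].
  destruct (nfM _ _ FM BM (fun x h => conj (BF x (proj1 h)) (proj2 h))) as [l1 H1].
  destruct (nfN _ _ FN BN (fun x h => conj (BF x (proj1 h)) (proj2 h))) as [l2 H2].
  exists (l1 ++ l2). intros x [Fx nBx]. apply in_or_app.
  destruct (Fg x Fx) as [g|g].
  + left; apply H1. split; [split; assumption| intros [h _]; exact (nBx h)].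
  + right; apply H2. split; [split; assumption| intros [h _]; exact (nBx h)].
-
  intros k Hk. apply (nkM k). intros FM BM HFM HBM BFM.
  destruct (base_exists HN) as [BN HBN].
  destruct (@fin_ext E N BN HN (proj1 HBN)) as [FN [HFN BFN]].
  assert (FMg : subset FM (ground M)) by exact (proj1 (proj1 HFM)).
  assert (FNg : subset FN (ground N)) by exact (proj1 (proj1 HFN)).
  assert (BMg : subset BM (ground M)) by exact (M1 _ (proj1 HBM)).
  assert (BNg : subset BN (ground N)) by exact (N1 _ (proj1 HBN)).
  destruct (Hk (setU FM FN) (setU BM BN)) as [l [Hl Hin]].
  + apply FS. rewrite (inter_l D FMg FNg), (inter_r D FMg FNg).
    split; [|split; assumption].
    intros x [h|h]; [left; apply FMg, h| right; apply FNg, h].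
  + apply BS. rewrite (inter_l D BMg BNg), (inter_r D BMg BNg).
    split; [|split; assumption].
    intros x [h|h]; [left; apply BMg, h| right; apply BNg, h].
  + intros x [h|h]; [left; apply BFM, h| right; apply BFN, h].
  + exists l. split; [exact Hl|]. intros x [Fx nBx]. apply Hin. split; [left; exact Fx|].
    intros [h|h]; [exact (nBx h)| exact (D x (FMg x Fx) (BNg x h))].
Qed.
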